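(* Let $G=(V,E)$ be a graph, $\mathcal{F}$ a monotone feature, and $f,g:E\to\mathbb{R}$ two filtering functions with $\sup_{e\in E}|f(e)-g(e)|\le h$ for some real $h>0$. Let $X\subseteq V\cup E$ have $\mathcal{F}$-interval $[u_1,v_1)$ in $(G,f)$ with $u_1+2h<v_1<+\infty$. Then $X$ has a non-empty $\mathcal{F}$-interval $[u_2,v_2)$ in $(G,g)$, and $|u_1-u_2|\le h$, $|v_1-v_2|\le h$.
   Context: Graphs are finite simple undirected graphs. For a filtering function $f:E\to\mathbb{R}$ and $u\in\mathbb{R}$, $G_{f,u}=(V_{f,u},E_{f,u})$ is the subgraph induced by the edge set $f^{-1}((-\infty,u])$ (vertices: endpoints of these edges); similarly $G_{g,u}$. Only subgraphs induced by edge sets are considered. A feature $\mathcal{F}$ assigns to every graph $H=(V_H,E_H)$ a function $2^{V_H\cup E_H}\to\{true,false\}$. It is monotone if (i) for any graphs $G'=(V',E')\subset G''$ and any $X\subseteq V'\cup E'$, $\mathcal{F}(X)=true$ in $G''$ implies $\mathcal{F}(X)=true$ in $G'$; and (ii) in any graph, for $Y\subset X$, $\mathcal{F}(X)=true$ implies $\mathcal{F}(Y)=true$. For monotone $\mathcal{F}$ and $X\subseteq V\cup E$ such that $\mathcal{F}(X)=true$ in $G_{f,u}$ for some $u$, the $\mathcal{F}$-interval of $X$ in $(G,f)$ is $[u_1,v_1)$, where $u_1$ is the lowest $u$ with $X\subseteq V_{f,u}\cup E_{f,u}$ and $v_1$ is the lowest $v\ge u_1$ with $\mathcal{F}(X)=false$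 in $G_{f,v}$, or $+\infty$ if there is none; it is the widest interval on which $\mathcal{F}(X)=true$ in $G_{f,w}$. The $\mathcal{F}$-interval in $(G,g)$ is defined analogously. *)

(* Defs.v *)
From HB Require Import structures.
From mathcomp Require Import all_boot all_order all_algebra.
From mathcomp Require Import constructive_ereal reals.
Set Implicit Arguments. Unset Strict Implicit. Unset Printing Implicit Defensive.
Import Order.TTheory GRing.Theory Num.Theory.
Local Open Scope ring_scope.

(* A finite simple undirected graph G = (V, E): a finite vertex type V, a finite
   edge type E, and an incidence map [ends] sending each edge to its set of
   endpoints, which has exactly two elements; distinct edges have distinct
   endpoint sets (no multi-edges). *)
Definition simple_graph (V E : finType) (ends : E -> {set V}) : Prop :=
  (forall e, #|ends e| = 2) /\ injective ends.

Definition verts (V E : finType) (ends : E -> {set V}) (S : {set E}) : {set V} :=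
  \bigcup_(e in S) ends e.

Definition sub_edges (R : realType) (E : finType) (f : E -> R) (u : R) : {set E} :=
  [set e | f e <= u].

(* A subset X of V ∪ E is represented as a pair (XV, XE). *)
Definition subset_of_sub (V E : finType) (ends : E -> {set V}) (S : {set E})
  (XV : {set V}) (XE : {set E}) : Prop :=
  XV \subset verts ends S /\ XE \subset S.

(* A feature, restricted to the (edge-induced) subgraphs of G:
   F S XV XE is the value of the feature, in the subgraph induced by the edge
   set S, on the set X = XV ∪ XE (only meaningful when X lies in that subgraph). *)
Definition feature (V E : finType) := {set E} -> {set V} -> {set E} -> bool.

Definition monotone (V E : finType) (ends : E -> {set V}) (F : feature V E) : Prop :=
  (forall (S1 S2 : {set E}) (XV : {set V}) (XE : {set E}),
      S1 \subset S2 -> subset_of_sub ends S1 XV XE ->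
      F S2 XV XE -> F S1 XV XE) /\
  (forall (S : {set E}) (XV YV : {set V}) (XE YE : {set E}),
      subset_of_sub ends S XV XE -> YV \subset XV -> YE \subset XE ->
      F S XV XE -> F S YV YE).

Definition least (R : realType) (P : R -> Prop) (u : R) : Prop :=
  P u /\ forall w, P w -> u <= w.

Definition F_interval (R : realType) (V E : finType) (ends : E -> {set V})
  (F : feature V E) (f : E -> R) (XV : {set V}) (XE : {set E})
  (u1 : R) (v1 : \bar R) : Prop :=
  (exists u, subset_of_sub ends (sub_edges f u) XV XE /\ F (sub_edges f u) XV XE) /\
  least (fun u => subset_of_sub ends (sub_edges f u) XV XE) u1 /\
  ((v1 = +oo%E /\ forall v, u1 <= v -> F (sub_edges f v) XV XE) \/
   (exists v : R, v1 = v%:E /\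
      least (fun v => u1 <= v /\ ~~ F (sub_edges f v) XV XE) v)).

(* Main.v *)
Require Import Defs.
From HB Require Import structures.
From mathcomp Require Import all_boot all_order all_algebra.
From mathcomp Require Import constructive_ereal reals.
From mathcomp Require Import lra.
From Stdlib Require Import Classical.
Import Order.TTheory GRing.Theory Num.Theory.
Local Open Scope ring_scope.

Lemma ex_min_list (R : realType) (T : eqType) (P : T -> Prop) (k : T -> R) (s : seq T) :
  (exists x, x \in s /\ P x) ->
  exists x, x \in s /\ P x /\ forall y, y \in s -> P y -> k x <= k y.
Proof.
elim: s => [|a s IH]; first by case=> x [].
case=> x [xin Px].
destruct (classic (exists x, x \in s /\ P x)) as [H|H].
- have [m [ms [Pm Hm]]] := IH H.
  destruct (classic (P a)) as [Pa|nPa].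
  + have [le|lt] := lerP (k a) (k m).
    * exists a; split; first by rewrite inE eqxx.
      split => // y; rewrite inE => /orP[/eqP->|ys] Py //.
      exact: le_trans le (Hm _ ys Py).
    * exists m; split; first by rewrite inE ms orbT.
      split => // y; rewrite inE => /orP[/eqP->|ys] Py; last exact: Hm.
      exact: ltW.
  + exists m; split; first by rewrite inE ms orbT.
    split => // y; rewrite inE => /orP[/eqP->|ys] Py; last exact: Hm.
    by [].
- have Pa : P a.
    move: xin; rewrite inE => /orP[/eqP<-|xs] //.
    by exfalso; apply: H; exists x.
  exists a; split; first by rewrite inE eqxx.
  split => // y; rewrite inE => /orP[/eqP->|ys] Py //.
  by exfalso; apply: H; exists y.
Qed.

Section S.
Local Set Implicit Arguments.
Variables (R : realType) (V E : finType) (ends : E -> {set V}).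

Lemma ex_min_E (P : E -> Prop) (k : E -> R) :
  (exists x, P x) -> exists x, P x /\ forall y, P y -> k x <= k y.
Proof.
case=> x Px.
have [m [_ [Pm Hm]]] := @ex_min_list R E P k (enum E) (ex_intro _ x (conj (mem_enum _ x) Px)).
by exists m; split => // y Py; apply: Hm => //; rewrite mem_enum.
Qed.

Lemma sub_edges_m (g : E -> R) (u : R) e0 : g e0 <= u ->
  exists e, g e <= u /\ sub_edges g (g e) = sub_edges g u.
Proof.
move=> H.
have [e [He Hm]] := @ex_min_E (fun e => g e <= u) (fun e => - g e) (ex_intro _ e0 H).
exists e; split => //; apply/setP => x; rewrite !inE.
apply/idP/idP => Hx; first exact: le_trans Hx He.
by have := Hm x Hx; rewrite lerN2.
Qed.

Lemma sub_edges_shift (f g : E -> R) (h u : R) :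
  (forall e, `|f e - g e| <= h) -> sub_edges f u \subset sub_edges g (u + h).
Proof.
move=> Hfg; apply/subsetP => e; rewrite !inE => Hf.
have := Hfg e; rewrite ler_norml => /andP[H1 H2]; lra.
Qed.

Lemma sos_mono (S1 S2 : {set E}) XV XE : S1 \subset S2 ->
  subset_of_sub ends S1 XV XE -> subset_of_sub ends S2 XV XE.
Proof.
move=> S12 [H1 H2]; split; last exact: subset_trans H2 S12.
apply: (subset_trans H1); apply/subsetP => v /bigcupP[e eS ve].
apply/bigcupP; exists e => //; exact: (subsetP S12).
Qed.

Lemma sos_empty (S1 S2 : {set E}) XV XE : S1 = set0 ->
  subset_of_sub ends S1 XV XE -> subset_of_sub ends S2 XV XE.
Proof.
move=> -> H; apply: (sos_mono _ H); exact: sub0set.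
Qed.

Lemma least_g (g : E -> R) (P : R -> Prop) w :
  (forall u, P u -> exists e, g e <= u /\ P (g e)) -> P w -> exists u, least P u.
Proof.
move=> Hc Pw.
have [e0 [_ Pe0]] := Hc w Pw.
have [m [Pm Hm]] := @ex_min_E (fun e => P (g e)) g (ex_intro _ e0 Pe0).
exists (g m); split => // x Px.
have [e [ex Pe]] := Hc x Px.
exact: le_trans (Hm _ Pe) ex.
Qed.

End S.

Theorem lemma3 (R : realType) (V E : finType) (ends : E -> {set V})
  (F : feature V E) (f g : E -> R) (h : R)
  (XV : {set V}) (XE : {set E}) (u1 v1 : R) :
  simple_graph ends -> monotone ends F ->
  0 < h -> (forall e, `|f e - g e| <= h) ->
  F_interval ends F f XV XE u1 v1%:E -> u1 + 2 * h < v1 ->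
  exists (u2 : R) (v2 : \bar R),
    F_interval ends F g XV XE u2 v2 /\ (u2%:E < v2)%E /\
    `|u1 - u2| <= h /\ (`|v1%:E - v2| <= h%:E)%E.
Proof.
move=> _ [Fm1 _] h0 Hfg [[w [Pw Fw]] [[Pu1 Hu1] Hv]].
have Hgf : forall e, `|g e - f e| <= h by move=> e; rewrite distrC.
case: Hv => [[]//|[v [[Ev] [[uv1 nF1] Hv1]]]].
subst v => Hlt.
set Pf := fun u => subset_of_sub ends (sub_edges f u) XV XE.
set Pg := fun u => subset_of_sub ends (sub_edges g u) XV XE.
have fg : forall u, Pf u -> Pg (u + h).
  move=> u; apply: sos_mono; exact: sub_edges_shift.
have gf : forall u, Pg u -> Pf (u + h).
  move=> u; apply: sos_mono; exact: sub_edges_shift.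
have Pfup : forall u u', u <= u' -> Pf u -> Pf u'.
  move=> u u' le; apply: sos_mono; apply/subsetP => e; rewrite !inE => H.
  exact: le_trans H le.
have Pgup : forall u u', u <= u' -> Pg u -> Pg u'.
  move=> u u' le; apply: sos_mono; apply/subsetP => e; rewrite !inE => H.
  exact: le_trans H le.
have Pgm : forall u, Pg u -> exists e, g e <= u /\ sub_edges g (g e) = sub_edges g u.
  move=> u Pu.
  destruct (classic (exists e, g e <= u)) as [[e0 He0]|nE].
    exact: sub_edges_m He0.
  exfalso.
  have S0 : sub_edges g u = set0.
    apply/setP => e; rewrite !inE; apply/negP => H; apply: nE; by exists e.
  have : Pg (u1 - h - 1) by apply: (@sos_empty _ _ _ _ _ _ _ S0 Pu).
  move/gf/Hu1; lra.
have [u2 [Pu2 Hu2]] : exists u2, least Pg u2.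
  apply: (@least_g R E g Pg (u1 + h)); last exact: fg.
  move=> u Pu; have [e [eu Se]] := Pgm u Pu; exists e; split => //.
  by rewrite /Pg Se.
have u2le : u2 <= u1 + h by apply: Hu2; exact: fg.
have u1le : u1 <= u2 + h by apply: Hu1; exact: gf.
have Ftrue : forall x, u1 <= x -> x < v1 -> F (sub_edges f x) XV XE.
  move=> x ux xv; apply/negPn/negP => nF.
  have := Hv1 x (conj ux nF); lra.
set Qg := fun x => u2 <= x /\ ~~ F (sub_edges g x) XV XE.
have Qg1 : Qg (v1 + h).
  split; first lra.
  apply/negP => Fg; move/negP: nF1; apply.
  apply: (Fm1 _ _ _ _ (@sub_edges_shift _ _ _ _ _ _ Hfg) _ Fg).
  exact: Pfup uv1 Pu1.
have [v2 [[uv2 nF2] Hv2]] : exists v2, least Qg v2.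
  apply: (@least_g R E g Qg (v1 + h)) => // x [ux nFx].
  have [e [ex Se]] := Pgm x (Pgup _ _ ux Pu2).
  exists e; split => //; split; last by rewrite Se.
  by apply: Hu2; rewrite /Pg Se; exact: Pgup ux Pu2.
have v2le : v2 <= v1 + h by apply: Hv2.
have vle : v1 <= v2 + h.
  apply: Hv1; split; first lra.
  apply/negP => Ff; move/negP: nF2; apply.
  apply: (Fm1 _ _ _ _ (@sub_edges_shift _ _ _ _ _ _ Hgf) _ Ff).
  exact: Pgup uv2 Pu2.
exists u2, v2%:E; split; last split; last split.
- split; first exists u2.
    split => //.
    apply: (Fm1 _ _ _ _ (@sub_edges_shift _ _ _ _ _ _ Hgf) _ (Ftrue _ _ _)) => //; lra.
  split; first by split.
  right; exists v2; split => //.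
- rewrite lte_fin; lra.
- rewrite ler_norml; apply/andP; split; lra.
- rewrite -EFinB abse_EFin lee_fin ler_norml; apply/andP; split; lra.
Qed.
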